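(* For every temporal oriented tree $\mathcal T$, the connectivity graph $G$ of $\mathcal T$ contains no even hole, i.e., no induced cycle of even length at least $6$.
   Context: A temporal digraph is a pair $(D,\lambda)$ with $D=(V,A)$ a finite digraph and $\lambda:A\to 2^{\{1,\dots,t_{\max}\}}$ giving the time-steps at which each arc is active. A temporal oriented tree $\mathcal T=(T,\lambda)$ is one whose underlying digraph $T$ is an orientation of a tree. A temporal path is a sequence $(v_1,v_2,t_1),\dots,(v_{k-1},v_k,t_{k-1})$ with pairwise distinct $v_i$, $\overrightarrow{v_iv_{i+1}}\in A$, $t_i\in\lambda(\overrightarrow{v_iv_{i+1}})$ and $t_1<\dots<t_{k-1}$. Two vertices $u\ne v$ are temporally connected if there is a temporal path from $u$ to $v$ or from $v$ to $u$. The connectivity graph of $\mathcal T$ is the undirected graph $G$ with $V(G)=V(T)$ and $uv\in E(G)$ iff $u\neq v$ and $u,v$ are temporally connected. *)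

(* Defs.v *)
From mathcomp Require Import all_boot.
Set Implicit Arguments. Unset Strict Implicit. Unset Printing Implicit Defensive.

(* A temporal labelling is
   lam : V -> V -> pred nat; lam x y is the set of time-steps at which the
   arc x -> y is active (only meaningful when A x y). *)

Section Temporal.
Variable V : finType.

Definition underlying (A : rel V) : rel V := fun x y => A x y || A y x.

(* a (simple) cycle of length >= 3 in an undirected relation U *)
Definition has_cycle (U : rel V) : Prop :=
  exists (x : V) (s : seq V),
    2 <= size s /\ uniq (x :: s) /\ path U x s /\ U (last x s) x.

Definition oriented_tree (A : rel V) : Prop :=
  [/\ 0 < #|V|,
      (forall x, ~~ A x x),
      (forall x y, A x y -> ~~ A y x),
      (forall x y, connect (underlying A) x y)
    & ~ has_cycle (underlying A)].

(* temporal path from u to v: u = v_1, v_2, ..., v_k = v (given as u :: s),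
   pairwise distinct, with times t_1 < ... < t_(k-1) (the list ts),
   arc v_i -> v_(i+1) present and t_i in lam v_i v_(i+1). *)
Definition temporal_path (A : rel V) (lam : V -> V -> pred nat)
    (u v : V) (s : seq V) (ts : seq nat) : Prop :=
  [/\ uniq (u :: s), last u s = v, size ts = size s,
      sorted ltn ts
    & forall i, i < size s ->
        A (nth u (u :: s) i) (nth u s i) /\
        nth 0 ts i \in lam (nth u (u :: s) i) (nth u s i)].

Definition has_temporal_path A lam (u v : V) : Prop :=
  exists s ts, temporal_path A lam u v s ts.

Definition conn_graph_edge A lam (u v : V) : Prop :=
  u <> v /\ (has_temporal_path A lam u v \/ has_temporal_path A lam v u).

(* (the default x0 of nth is irrelevant since i, j < size c) *)
Definition induced_cycle (E : V -> V -> Prop) (c : seq V) : Prop :=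
  [/\ 3 <= size c, uniq c
    & forall (x0 : V) i j, i < size c -> j < size c ->
        (E (nth x0 c i) (nth x0 c j) <->
         (j == i.+1 %% size c) || (i == j.+1 %% size c))].

End Temporal.

(* Main.v *)
Require Import Defs.
From mathcomp Require Import all_boot zify.
From Stdlib Require Import Classical.
Set Implicit Arguments. Unset Strict Implicit. Unset Printing Implicit Defensive.

Definition avoid (V : finType) (e : rel V) (z : V) : rel V :=
  fun x y => [&& e x y, x != z & y != z].

Lemma path_avoid_mem (V : finType) (e : rel V) z x p :
  path (avoid e z) x p -> forall w, w \in p -> w != z.
Proof.
elim: p x => [|y p IH] x //= /andP[/and3P[_ _ yz] Hp] w.
rewrite in_cons => /orP[/eqP->//|]; exact: IH Hp w.
Qed.

Lemma path_restrict (V : finType) (e : rel V) z x p :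
  path e x p -> z \notin x :: p -> path (avoid e z) x p.
Proof.
elim: p x => [|y p IH] x //= /andP[exy Hp].
rewrite !in_cons !negb_or => /and3P[zx zy zp].
rewrite /avoid exy eq_sym zx eq_sym zy /=; apply: IH => //.
by rewrite in_cons negb_or zy.
Qed.

Lemma avoid_sub (V : finType) (e : rel V) z : subrel (avoid e z) e.
Proof. by move=> x y /and3P[]. Qed.

Lemma connect_avoid_sub (V : finType) (e : rel V) z x y :
  connect (avoid e z) x y -> connect e x y.
Proof.
move=> H; apply: (connect_sub _ H) => u w /avoid_sub; exact: connect1.
Qed.

Lemma first_step (V : finType) (e : rel V) x y :
  connect e x y -> x != y -> exists2 x', e x x' & connect (avoid e x) x' y.
Proof.
case/connectP=> p Hp ->; case: (shortenP Hp) => p' Hp' Hu _ {Hp}.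
case: p' Hp' Hu => [|x' p''] /=; first by rewrite eqxx.
move=> /andP[exx Hp] Hu _; exists x' => //.
apply/connectP; exists p'' => //; apply: path_restrict => //.
by move: Hu => /andP[].
Qed.

Lemma sym_avoid (V : finType) (e : rel V) z :
  symmetric e -> symmetric (avoid e z).
Proof.
move=> se x y; rewrite /avoid se.
by case: (e y x); case: (x != z); case: (y != z).
Qed.

Lemma underlying_sym (V : finType) (A : rel V) : symmetric (underlying A).
Proof. by move=> x y; rewrite /underlying orbC. Qed.

Lemma underlying_neq (V : finType) (A : rel V) x y :
  (forall x, ~~ A x x) -> underlying A x y -> x != y.
Proof.
move=> irr; apply: contraTneq => ->; rewrite /underlying orbb; exact: irr.
Qed.

Lemma sep (V : finType) (A : rel V) z u w :
  (forall x, ~~ A x x) -> ~ has_cycle (underlying A) ->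
  underlying A z u -> underlying A z w ->
  connect (avoid (underlying A) z) u w -> u = w.
Proof.
move=> irr nocyc zu zw /connectP[p Hp Hw].
case: (shortenP Hp) Hw => p' Hp' Hu Hsub Hw.
case: (eqVneq u w) => // uw; exfalso; apply: nocyc.
exists z, (u :: p'); refine (conj _ (conj _ (conj _ _))).
- case: p' Hw {Hp' Hu Hsub} => [|a p'] /=; last by [].
  by move=> E; rewrite E eqxx in uw.
- rewrite /= in_cons negb_or (underlying_neq irr zu) /=.
  move: Hu => /= ->; rewrite andbT; apply/negP => /Hsub /(path_avoid_mem Hp).
  by rewrite eqxx.
- rewrite /= zu /=; apply: sub_path Hp'; exact: avoid_sub.
- by rewrite /= -Hw underlying_sym.
Qed.


Fixpoint tw (V : finType) (A : rel V) (lam : V -> V -> pred nat)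
   (u : V) (t0 : nat) (s : seq V) (ts : seq nat) : Prop :=
  match s, ts with
  | [::], [::] => True
  | v :: s', t :: ts' => [/\ A u v, t \in lam u v, t0 < t & tw A lam v t s' ts']
  | _, _ => False
  end.

Lemma tw_mono (V : finType) (A : rel V) lam u t0 t1 s ts :
  tw A lam u t1 s ts -> t0 <= t1 -> tw A lam u t0 s ts.
Proof.
case: s ts => [|v s] [|t ts] //= [H1 H2 H3 H4] le; split => //; lia.
Qed.

Lemma tw_path (V : finType) (A : rel V) lam u t0 s ts :
  tw A lam u t0 s ts -> path A u s.
Proof.
elim: s u t0 ts => [|v s IH] u t0 [|t ts] //= [H1 _ _ H4].
by rewrite H1 /=; apply: IH H4.
Qed.

Lemma tw_last_ge (V : finType) (A : rel V) lam u t0 s ts :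
  tw A lam u t0 s ts -> t0 <= last t0 ts.
Proof.
elim: s u t0 ts => [|v s IH] u t0 [|t ts] //= [_ _ H3 H4].
have := IH _ _ _ H4; lia.
Qed.

Lemma tw_split (V : finType) (A : rel V) lam u t0 p q ts :
  tw A lam u t0 (p ++ q) ts ->
  exists tp tq, [/\ ts = tp ++ tq, tw A lam u t0 p tp &
                    tw A lam (last u p) (last t0 tp) q tq].
Proof.
elim: p u t0 ts => [|v p IH] u t0 ts /=.
  by move=> H; exists [::], ts.
case: ts => [|t ts] //= [H1 H2 H3 H4].
have [tp [tq [E Hp Hq]]] := IH _ _ _ H4.
by exists (t :: tp), tq; rewrite E.
Qed.

Lemma tw_cat (V : finType) (A : rel V) lam u t0 p q tp tq :
  tw A lam u t0 p tp -> tw A lam (last u p) (last t0 tp) q tq ->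
  tw A lam u t0 (p ++ q) (tp ++ tq).
Proof.
elim: p u t0 tp => [|v p IH] u t0 [|t tp] //= [H1 H2 H3 H4] Hq.
split => //; exact: IH.
Qed.

Definition nthcond (V : finType) (A : rel V) (lam : V -> V -> pred nat)
  (u : V) (s : seq V) (ts : seq nat) :=
  forall i, i < size s ->
        A (nth u (u :: s) i) (nth u s i) /\
        nth 0 ts i \in lam (nth u (u :: s) i) (nth u s i).

Lemma tw_nth (V : finType) (A : rel V) lam u t0 s ts :
  tw A lam u t0 s ts <->
  [/\ size ts = size s, path ltn t0 ts & nthcond A lam u s ts].
Proof.
elim: s u t0 ts => [|v s IH] u t0 [|t ts] /=; try by split=> // [[]].
split.
- move=> [H1 H2 H3 /IH [E P N]]; split; first by rewrite E.
  + by rewrite H3.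
  move=> [|i] /= Hi; first by [].
  have [N1 N2] := N i Hi.
  have e1 : nth u (v :: s) i = nth v (v :: s) i by apply: set_nth_default => /=; lia.
  have e2 : nth u s i = nth v s i by apply: set_nth_default => /=; lia.
  by rewrite e1 e2.
- move=> [[E] /andP[H3 P] N].
  have [N1 N2] := N 0 isT.
  split => //; apply/IH; split => // i Hi.
  have [M1 M2] := N i.+1 Hi; move: M1 M2 => /=.
  have e1 : nth u (v :: s) i = nth v (v :: s) i by apply: set_nth_default => /=; lia.
  have e2 : nth u s i = nth v s i by apply: set_nth_default => /=; lia.
  by rewrite e1 e2.
Qed.

Lemma tp_tw (V : finType) (A : rel V) lam u v s ts :
  (forall x y t, A x y -> t \in lam x y -> 1 <= t) ->
  temporal_path A lam u v s ts <->
  [/\ uniq (u :: s), last u s = v & tw A lam u 0 s ts].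
Proof.
move=> pos; split.
- case=> H1 H2 H3 H4 H5; split => //; apply/tw_nth; split => //.
  case: ts H3 H4 H5 => [|t ts] //= H3 H4 H5.
  case: s H3 H5 {H1 H2} => [|x s] //= _ H5.
  have [N1 N2] := H5 0 isT; rewrite /= in N1 N2.
  by rewrite H4 andbT; apply: pos N1 N2.
- case=> H1 H2 /tw_nth [H3 H4 H5]; split => //.
  case: ts H4 {H3 H5} => [|t ts] //= /andP[_ ->].
  by [].
Qed.

Lemma loopfree (V : finType) (A : rel V) lam u t0 s ts :
  tw A lam u t0 s ts ->
  exists s' ts', [/\ uniq (u :: s'), last u s' = last u s,
                    {subset s' <= s} & tw A lam u t0 s' ts'].
Proof.
move: {2}(size s) (leqnn (size s)) => m; elim: m u t0 s ts => [|m IH] u t0 s ts.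
  by case: s => //= _; case: ts => // _; exists [::], [::].
move=> Hm Hw.
case: (boolP (u \in s)) => [us|nus].
- case/splitPr: us Hm Hw => s1 s2 Hm Hw.
  have [tp [tq [E Hp Hq]]] := tw_split Hw.
  case: tq Hq E => [|t tq] //= [_ _ Hlt Hq] E.
  have Hq' : tw A lam u t0 s2 tq.
    apply: tw_mono Hq _; have := tw_last_ge Hp; lia.
  have Hm2 : size s2 <= m by move: Hm; rewrite size_cat /=; lia.
  have [s' [ts' [H1 H2 H3 H4]]] := IH u t0 s2 tq Hm2 Hq'.
  exists s', ts'; split => //.
  + by rewrite H2 last_cat.
  + by move=> w /H3 ws2; rewrite mem_cat in_cons ws2 !orbT.
- case: s ts Hm Hw nus => [|v s] [|t ts] //=.
    by move=> _ _ _; exists [::], [::].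
  move=> Hm [H1 H2 H3 H4] nus.
  have [s' [ts' [K1 K2 K3 K4]]] := IH v t s ts Hm H4.
  exists (v :: s'), (t :: ts'); split => //.
  + rewrite /= in_cons negb_or; move: nus; rewrite in_cons negb_or => /andP[-> nus].
    move: K1 => /= /andP[-> ->]; rewrite !andbT; apply/negP => /K3; exact/negP.
  + by move=> w; rewrite !in_cons => /orP[->//|/K3 ->]; rewrite orbT.
Qed.

Lemma htp_of_walk (V : finType) (A : rel V) lam u v s ts :
  (forall x y t, A x y -> t \in lam x y -> 1 <= t) ->
  tw A lam u 0 s ts -> last u s = v -> has_temporal_path A lam u v.
Proof.
move=> pos Hw Hl; have [s' [ts' [H1 H2 _ H4]]] := loopfree Hw.
exists s', ts'; apply/tp_tw => //; split => //; by rewrite H2.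
Qed.

Lemma walk_of_htp (V : finType) (A : rel V) lam u v :
  (forall x y t, A x y -> t \in lam x y -> 1 <= t) ->
  has_temporal_path A lam u v ->
  exists s ts, [/\ uniq (u :: s), last u s = v & tw A lam u 0 s ts].
Proof. by move=> pos [s [ts /tp_tw H]]; exists s, ts; apply: H. Qed.

Lemma decomp (V : finType) (A : rel V) lam u t0 s ts z :
  tw A lam u t0 s ts -> z \in u :: s ->
  exists p q tp tq, [/\ tw A lam u t0 p tp, last u p = z,
     tw A lam z (last t0 tp) q tq & last z q = last u s].
Proof.
move=> Hw; rewrite in_cons => /orP[/eqP->|zs].
  by exists [::], s, [::], ts.
case/splitPr: zs Hw => s1 s2 Hw.
move: Hw; rewrite -cat_rcons => Hw.
have [tp [tq [E Hp Hq]]] := tw_split Hw.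
exists (rcons s1 z), s2, tp, tq; split => //.
- by rewrite last_rcons.
- by rewrite last_rcons in Hq.
by rewrite last_cat last_rcons.
Qed.

Lemma cross (V : finType) (A : rel V) lam a x c y s ts r rs z :
  (forall x y t, A x y -> t \in lam x y -> 1 <= t) ->
  tw A lam a 0 s ts -> last a s = x -> z \in a :: s ->
  tw A lam c 0 r rs -> last c r = y -> z \in c :: r ->
  has_temporal_path A lam a y \/ has_temporal_path A lam c x.
Proof.
move=> pos H1 L1 z1 H2 L2 z2.
have [p [q [tp [tq [P1 P2 P3 P4]]]]] := decomp H1 z1.
have [p' [q' [tp' [tq' [Q1 Q2 Q3 Q4]]]]] := decomp H2 z2.
case: (leqP (last 0 tp) (last 0 tp')) => le.
- left; apply: (@htp_of_walk _ _ _ _ _ (p ++ q') (tp ++ tq')) => //.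
  + apply: tw_cat => //; rewrite P2; exact: tw_mono Q3 le.
  + by rewrite last_cat P2 Q4.
- right; apply: (@htp_of_walk _ _ _ _ _ (p' ++ q) (tp' ++ tq)) => //.
  + apply: tw_cat => //; rewrite Q2; apply: tw_mono P3 _; lia.
  + by rewrite last_cat Q2 P4.
Qed.


Record setup (V : finType) (A : rel V) (lam : V -> V -> pred nat) (c : seq V) : Prop :=
  Setup {
  s_irr : forall x, ~~ A x x;
  s_anti : forall x y, A x y -> ~~ A y x;
  s_conn : forall x y, connect (underlying A) x y;
  s_nocyc : ~ has_cycle (underlying A);
  s_pos : forall x y t, A x y -> t \in lam x y -> 1 <= t;
  s_ind : induced_cycle (conn_graph_edge A lam) c;
  s_size : 6 <= size c }.

Definition cc (V : finType) (x0 : V) (c : seq V) (j : nat) := nth x0 c (j %% size c).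

Lemma mod_ne n a f g : f < n -> g < n -> f != g -> (a + f) %% n != (a + g) %% n.
Proof. by move=> fn gn fg; rewrite eqn_modDl !modn_small. Qed.


Lemma cc_mod (V : finType) (x0 : V) c j k : j %% size c = k %% size c -> cc x0 c j = cc x0 c k.
Proof. by rewrite /cc => ->. Qed.

Lemma cc_inj (V : finType) (A : rel V) lam c (S : setup A lam c) x0 j k :
  cc x0 c j = cc x0 c k -> j %% size c = k %% size c.
Proof.
case: (s_ind S) => _ uc _; have n0 : 0 < size c by have := s_size S; lia.
by rewrite /cc => /eqP; rewrite nth_uniq ?ltn_pmod // => /eqP.
Qed.

Lemma G_cc (V : finType) (A : rel V) lam c (S : setup A lam c) x0 i j :
  conn_graph_edge A lam (cc x0 c i) (cc x0 c j) <->
  ((j %% size c == (i %% size c).+1 %% size c) ||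
   (i %% size c == (j %% size c).+1 %% size c)).
Proof.
case: (s_ind S) => _ uc H; have n0 : 0 < size c by have := s_size S; lia.
by apply: H; rewrite ltn_pmod.
Qed.

Lemma farG (V : finType) (A : rel V) lam c (S : setup A lam c) x0 a b :
  a <= b -> 2 <= b - a <= size c - 2 ->
  ~ has_temporal_path A lam (cc x0 c a) (cc x0 c b) /\
  ~ has_temporal_path A lam (cc x0 c b) (cc x0 c a).
Proof.
move=> ab hf; have n6 := s_size S.
have [f E [f2 fn]] : exists2 f, b = a + f & 2 <= f /\ f <= size c - 2.
  by exists (b - a); lia.
subst b; clear ab hf.
have neq : cc x0 c a <> cc x0 c (a + f).
  move=> /(cc_inj S) /eqP.
  have h : (a + 0) %% size c != (a + f) %% size c by apply: (@mod_ne (size c) a 0 f); lia.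
  by rewrite addn0 in h; rewrite (negbTE h).
have ng : ~ ((((a + f) %% size c == (a %% size c).+1 %% size c) ||
     (a %% size c == ((a + f) %% size c).+1 %% size c))).
  have h1 : (a + f) %% size c != (a + 1) %% size c by apply: (@mod_ne (size c) a f 1); lia.
  have h2 : (a + 0) %% size c != (a + (f + 1)) %% size c by apply: (@mod_ne (size c) a 0 (f + 1)); lia.
  rewrite addn0 in h2.
  rewrite -(addn1 (a %% size c)) -(addn1 ((a + f) %% size c)) !modnDml -addnA.
  by rewrite (negbTE h1) (negbTE h2).
split=> H.
- apply: ng; apply/(G_cc S x0 a (a + f)); split => //; by left.
- apply: ng; rewrite orbC; apply/(G_cc S x0 (a + f) a); split; last by left.
  by move=> E; apply: neq.
Qed.


Definition onP (V : finType) (A : rel V) lam (x0 : V) c (z : V) (i : nat) :=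
  exists u v s ts,
  [/\ (u = cc x0 c i /\ v = cc x0 c i.+1) \/ (u = cc x0 c i.+1 /\ v = cc x0 c i),
      uniq (u :: s), last u s = v, tw A lam u 0 s ts & z \in u :: s].

Lemma stepA (V : finType) (A : rel V) lam c (S : setup A lam c) x0 i :
  exists u v s ts,
  [/\ (u = cc x0 c i /\ v = cc x0 c i.+1) \/ (u = cc x0 c i.+1 /\ v = cc x0 c i),
      uniq (u :: s), last u s = v & tw A lam u 0 s ts].
Proof.
have : conn_graph_edge A lam (cc x0 c i) (cc x0 c i.+1).
  apply/(G_cc S); rewrite -[(i %% size c).+1]addn1 modnDml addn1.
  by rewrite eqxx.
case=> _ [] /(walk_of_htp (s_pos S)) [s [ts [H1 H2 H3]]].
- by exists (cc x0 c i), (cc x0 c i.+1), s, ts; split => //; left.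
- by exists (cc x0 c i.+1), (cc x0 c i), s, ts; split => //; right.
Qed.

Lemma far (V : finType) (A : rel V) lam c (S : setup A lam c) x0 z p q :
  p <= q -> 3 <= q - p <= size c - 3 ->
  onP A lam x0 c z p -> onP A lam x0 c z q -> False.
Proof.
move=> pq hd [u [v [s [ts [D1 U1 L1 W1 Z1]]]]] [u' [v' [s' [ts' [D2 U2 L2 W2 Z2]]]]].
have key : forall a b, (a == p) || (a == p.+1) -> (b == q) || (b == q.+1) ->
    ~ has_temporal_path A lam (cc x0 c a) (cc x0 c b) /\
    ~ has_temporal_path A lam (cc x0 c b) (cc x0 c a).
  move=> a b /orP[/eqP->|/eqP->] /orP[/eqP->|/eqP->]; apply: farG => //; lia.
have := cross (s_pos S) W1 L1 Z1 W2 L2 Z2.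
case: D1 => [[-> ->]|[-> ->]]; case: D2 => [[-> ->]|[-> ->]]; case=> H.
- by apply: (proj1 (key _ _ _ _)) H; rewrite eqxx ?orbT.
- by apply: (proj2 (key _ _ _ _)) H; rewrite eqxx ?orbT.
- by apply: (proj1 (key _ _ _ _)) H; rewrite eqxx ?orbT.
- by apply: (proj2 (key _ _ _ _)) H; rewrite eqxx ?orbT.
- by apply: (proj1 (key _ _ _ _)) H; rewrite eqxx ?orbT.
- by apply: (proj2 (key _ _ _ _)) H; rewrite eqxx ?orbT.
- by apply: (proj1 (key _ _ _ _)) H; rewrite eqxx ?orbT.
- by apply: (proj2 (key _ _ _ _)) H; rewrite eqxx ?orbT.
Qed.

Lemma pre_suf (V : finType) (A : rel V) lam u s ts z :
  (forall x y t, A x y -> t \in lam x y -> 1 <= t) ->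
  tw A lam u 0 s ts -> z \in u :: s ->
  has_temporal_path A lam u z /\ has_temporal_path A lam z (last u s).
Proof.
move=> pos W Z; have [p [q [tp [tq [P1 P2 P3 P4]]]]] := decomp W Z.
split; first exact: htp_of_walk P1 P2.
apply: (htp_of_walk pos _ P4); exact: tw_mono P3 _.
Qed.

Lemma interior (V : finType) (A : rel V) lam c (S : setup A lam c) x0 j l :
  1 <= l <= size c - 2 -> ~ onP A lam x0 c (cc x0 c j) (j + l).
Proof.
move=> hl [u [v [s [ts [D U L W Z]]]]]; have n6 := s_size S.
have [Hp Hs] := pre_suf (s_pos S) W Z; rewrite L in Hs.
have cj : cc x0 c j = cc x0 c (j + size c) by apply: cc_mod; rewrite modnDr.
rewrite cj in Hp Hs.
case: (leqP 2 l) => l2.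
- have [K1 K2] := farG S x0 (a := j + l) (b := j + size c) ltac:(lia) ltac:(lia).
  by case: D => [[E1 E2]|[E1 E2]]; rewrite E1 E2 in Hp Hs; [exact: K1 Hp | exact: K2 Hs].
- have [K1 K2] := farG S x0 (a := (j + l).+1) (b := j + size c) ltac:(lia) ltac:(lia).
  by case: D => [[E1 E2]|[E1 E2]]; rewrite E1 E2 in Hp Hs; [exact: K2 Hs | exact: K1 Hp].
Qed.


Lemma A_und (V : finType) (A : rel V) : subrel A (underlying A).
Proof. by move=> x y H; rewrite /underlying H. Qed.

Lemma cs_avoid (V : finType) (A : rel V) z :
  connect_sym (avoid (underlying A) z).
Proof. apply: sym_connect_sym; apply: sym_avoid; exact: underlying_sym. Qed.

Lemma noOnP_conn (V : finType) (A : rel V) lam c (S : setup A lam c) x0 z i :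
  ~ onP A lam x0 c z i ->
  connect (avoid (underlying A) z) (cc x0 c i) (cc x0 c i.+1).
Proof.
move=> nP; have [u [v [s [ts [D U L W]]]]] := stepA S x0 i.
have zn : z \notin u :: s.
  by apply/negP => Z; apply: nP; exists u, v, s, ts; split.
have Hc : connect (avoid (underlying A) z) u v.
  apply/connectP; exists s => //; apply: path_restrict => //.
  apply: sub_path (tw_path W); exact: A_und.
by case: D Hc => [[-> ->]|[-> ->]] //; rewrite cs_avoid.
Qed.

Lemma run (V : finType) (A : rel V) lam c (S : setup A lam c) x0 z i m :
  (forall l, l < m -> ~ onP A lam x0 c z (i + l)) ->
  forall l, l <= m -> connect (avoid (underlying A) z) (cc x0 c i) (cc x0 c (i + l)).
Proof.
move=> H; elim=> [|l IH] lm; first by rewrite addn0 connect0.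
apply: connect_trans (IH (ltnW lm)) _; rewrite addnS.
apply: (noOnP_conn S); apply: H; exact: lm.
Qed.

Lemma nbr_branch (V : finType) (A : rel V) lam c (S : setup A lam c) z v :
  z != v -> exists2 a, underlying A z a & connect (avoid (underlying A) z) a v.
Proof. move=> zv; exact: first_step (s_conn S z v) zv. Qed.

Lemma branch_uniq (V : finType) (A : rel V) lam c (S : setup A lam c) z a a' v :
  underlying A z a -> underlying A z a' ->
  connect (avoid (underlying A) z) a v -> connect (avoid (underlying A) z) a' v ->
  a = a'.
Proof.
move=> za za' H H'; apply: (sep (s_irr S) (s_nocyc S) za za').
by apply: connect_trans H _; rewrite cs_avoid.
Qed.

Lemma not_reach_center (V : finType) (e : rel V) a x :
  connect (avoid e a) x a -> x = a.
Proof.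
case/connectP=> p Hp E; case: p Hp E => [|y p] // Hp E; rewrite /= in E.
have : last y p \in y :: p by apply: mem_last.
rewrite -E => /(path_avoid_mem Hp); by rewrite eqxx.
Qed.

Lemma disjoint_br (V : finType) (A : rel V) lam c (S : setup A lam c) z a v :
  underlying A z a -> connect (avoid (underlying A) z) a v ->
  connect (avoid (underlying A) a) z v -> False.
Proof.
move=> za H1 H2.
have av : a != v.
  apply/negP => /eqP E; rewrite -E in H2; move/not_reach_center: H2 => E2.
  by move: (underlying_neq (s_irr S) za); rewrite E2 eqxx.
have [a' /and3P[aa' _ a'z] H3] := first_step H1 av.
have H4 : connect (avoid (underlying A) a) a' v.
  apply: connect_sub H3 => x y /and3P[/and3P[e1 e2 e3] e4 e5].
  by apply: connect1; rewrite /avoid e1 e4 e5.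
have E : a' = z.
  apply: (sep (s_irr S) (s_nocyc S) aa'); first by rewrite underlying_sym.
  by apply: connect_trans H4 _; rewrite cs_avoid.
by rewrite E eqxx in a'z.
Qed.

Lemma branch_sub (V : finType) (A : rel V) lam c (S : setup A lam c) z a b v :
  underlying A z a -> underlying A a b -> b != z ->
  connect (avoid (underlying A) a) b v -> connect (avoid (underlying A) z) a v.
Proof.
move=> za ab bz /connectP[p Hp ->].
have zn : z \notin b :: p.
  apply/negP => /(path_connect Hp) Hz.
  have := sep (s_irr S) (s_nocyc S) ab _ Hz; rewrite underlying_sym => E.
  by rewrite (E za) eqxx in bz.
apply/connectP; exists (b :: p) => //; apply: path_restrict.
  rewrite /= ab /=; apply: sub_path Hp; exact: avoid_sub.
rewrite in_cons negb_or zn andbT.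
exact: underlying_neq (s_irr S) za.
Qed.


Definition heavy (V : finType) (A : rel V) (x0 : V) c z a :=
  underlying A z a /\
  exists i, forall l, l < size c - 2 -> connect (avoid (underlying A) z) a (cc x0 c (i + l)).

Lemma windows_meet n i i' : 5 <= n ->
  exists l l', [/\ l < n - 2, l' < n - 2 & (i + l) %% n = (i' + l') %% n].
Proof.
move=> n5.
have [r rn Er] : exists2 r, r < n & i %% n = r by exists (i %% n); [apply: ltn_pmod; lia|].
have [r' rn' Er'] : exists2 r, r < n & i' %% n = r by exists (i' %% n); [apply: ltn_pmod; lia|].
suff [l [l' [H1 H2 H3]]] : exists l l', [/\ l < n - 2, l' < n - 2 &
   (r + l = r' + l') \/ (r + l + n = r' + l') \/ (r + l = r' + l' + n)].
  exists l, l'; split => //; rewrite -modnDml Er -(modnDml i') Er'.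
  by case: H3 => [->|[<-|->]]; rewrite ?modnDr.
case: (leqP r r') => rr.
- case: (ltnP (r' - r) (n - 2)) => h.
  + exists (r' - r), 0; split; [lia|lia|left; lia].
  + exists 0, (n - (r' - r)); split; [lia|lia|right; left; lia].
- case: (ltnP (r - r') (n - 2)) => h.
  + exists 0, (r - r'); split; [lia|lia|left; lia].
  + exists (n - (r - r')), 0; split; [lia|lia|right; right; lia].
Qed.

Lemma descent (V : finType) (A : rel V) lam c (S : setup A lam c) x0 :
  (forall z, exists a, heavy A x0 c z a) ->
  forall m z a, #|[set v | connect (avoid (underlying A) z) a v]| <= m ->
  ~ heavy A x0 c z a.
Proof.
move=> Hall; elim=> [|m IH] z a Hm [za [i Hi]].
  have : 0 < #|[set v | connect (avoid (underlying A) z) a v]|.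
    by apply/card_gt0P; exists a; rewrite inE connect0.
  lia.
have [b [ab [i' Hi']]] := Hall a.
have n6 := s_size S.
have bz : b != z.
  apply/negP => /eqP E; subst b.
  have [l [l' [H1 H2 H3]]] := windows_meet i i' (ltnW n6).
  apply: (disjoint_br S za (Hi l H1)); rewrite (cc_mod x0 H3); exact: Hi' l' H2.
apply: (IH a b) => //; last by split => //; exists i'.
rewrite -ltnS; apply: leq_trans Hm; apply: proper_card; apply/properP; split.
  apply/subsetP => v; rewrite !inE => H; exact: (branch_sub S za ab bz H).
exists a; first by rewrite inE connect0. rewrite inE; apply/negP => /not_reach_center E.
by move: (underlying_neq (s_irr S) ab); rewrite E eqxx.
Qed.

Lemma good_z (V : finType) (A : rel V) lam c (S : setup A lam c) x0 :
  exists z, forall a, ~ heavy A x0 c z a.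
Proof.
case: (classic (exists z, forall a, ~ heavy A x0 c z a)) => // H; exfalso.
have Hall : forall z, exists a, heavy A x0 c z a.
  move=> z; apply: NNPP => H1; apply: H; exists z => a Ha; apply: H1; by exists a.
have [a Ha] := Hall x0.
exact: (descent S Hall (leqnn _) Ha).
Qed.


Lemma windowF (V : finType) (A : rel V) lam c (S : setup A lam c) x0 z i :
  (forall a, ~ heavy A x0 c z a) -> z != cc x0 c i ->
  (forall l, l < size c - 3 -> ~ onP A lam x0 c z (i + l)) -> False.
Proof.
move=> good zi H.
have R := run S H.
have [a za Ha] := nbr_branch S zi.
apply: (good a); split => //; exists i => l hl.
apply: connect_trans Ha (R l _); lia.
Qed.

Lemma cc_neq_succ (V : finType) (A : rel V) lam c (S : setup A lam c) x0 j :
  cc x0 c j != cc x0 c j.+1.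
Proof.
have n6 := s_size S.
apply/negP => /eqP /(cc_inj S) /eqP; rewrite -(addn1 j) -{1}(addn0 j).
have h : (j + 0) %% size c != (j + 1) %% size c by apply: (@mod_ne (size c) j 0 1); lia.
by rewrite (negbTE h).
Qed.

Lemma z_notC (V : finType) (A : rel V) lam c (S : setup A lam c) x0 z :
  (forall a, ~ heavy A x0 c z a) -> forall j, z != cc x0 c j.
Proof.
move=> good j; apply/negP => /eqP E.
have n6 := s_size S.
apply: (windowF S (i := j.+1) good).
  by rewrite E (cc_neq_succ S).
move=> l hl; rewrite E; have -> : j.+1 + l = j + l.+1 by lia.
apply: (interior S); lia.
Qed.

Lemma window_on (V : finType) (A : rel V) lam c (S : setup A lam c) x0 z :
  (forall a, ~ heavy A x0 c z a) -> forall i,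
  exists l, l < size c - 3 /\ onP A lam x0 c z (i + l).
Proof.
move=> good i; apply: NNPP => H.
apply: (windowF S good (z_notC S good i)) => l hl Hp; apply: H; by exists l.
Qed.

Lemma through (V : finType) (A : rel V) lam c (S : setup A lam c) x0 z i :
  (forall j, z != cc x0 c j) -> onP A lam x0 c z i ->
  exists l r, [/\ underlying A z l, underlying A z r,
     connect (avoid (underlying A) z) l (cc x0 c i),
     connect (avoid (underlying A) z) r (cc x0 c i.+1) & A l z != A r z].
Proof.
move=> zC [u [v [s [ts [D U L W Z]]]]].
have zu : z != u by case: D => [[-> _]|[-> _]].
have zv : z != v by case: D => [[_ ->]|[_ ->]].
move: Z; rewrite in_cons (negbTE zu) /= => Z.
case/splitPr: Z U L W => s1 s2 U L W.
case: s2 U L W => [|q s2] U L W.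
  by rewrite last_cat /= in L; rewrite L eqxx in zv.
have Hpath := tw_path W.
rewrite cat_path /= in Hpath; case/and4P: Hpath => P1 Apz Azq P2.
rewrite -cat_cons cat_uniq in U; case/and3P: U => _ nh U2.
have zs1 : z \notin u :: s1.
  by apply/negP => Hz; move/hasP: nh; apply; exists z; rewrite ?in_cons ?eqxx.
have zs2 : z \notin q :: s2 by move: U2; rewrite /= => /andP[].
have C1 : connect (avoid (underlying A) z) u (last u s1).
  apply/connectP; exists s1 => //; apply: path_restrict => //.
  apply: sub_path P1; exact: A_und.
have C2 : connect (avoid (underlying A) z) q v.
  apply/connectP; exists s2; last by rewrite -L last_cat.
  apply: path_restrict => //; apply: sub_path P2; exact: A_und.
have uz1 : underlying A z (last u s1) by rewrite /underlying Apz orbT.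
have uz2 : underlying A z q by rewrite /underlying Azq.
have nqz : ~~ A q z := s_anti S Azq.
rewrite cs_avoid in C1.
case: D => [[Eu Ev]|[Eu Ev]].
- exists (last u s1), q; rewrite -Eu -Ev; split => //.
  by rewrite Apz (negbTE nqz).
- exists q, (last u s1); rewrite -Eu -Ev; split => //.
  by rewrite Apz (negbTE nqz).
Qed.


Lemma no_hole (V : finType) (A : rel V) lam c (S : setup A lam c) (x0 : V) : False.
Proof.
have n6 := s_size S.
have [z good] := good_z S x0.
have zC := z_notC S good.
have W := window_on S good.
have nf : forall p q, onP A lam x0 c z p -> onP A lam x0 c z q ->
    ~ (p <= q /\ 3 <= q - p <= size c - 3).
  move=> p q Hp Hq [H1 H2]; exact (far S H1 H2 Hp Hq).
have [l0 [h0 P0]] := W 0; rewrite add0n in P0.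
have [l1 [h1 P1]] := W (l0 + 1).
have [l2 [h2 P2]] := W (l0 + 2).
have [l3 [h3 P3]] := W (l0 + 3).
have f01 := nf _ _ P0 P1.
have f02 := nf _ _ P0 P2.
have f03 := nf _ _ P0 P3.
have e1 : l1 <= 1 by lia.
have e2 : l2 = 0 \/ l2 = size c - 4 by lia.
have e3 : size c - 5 <= l3 by lia.
clear f01 f02 f03.
have f12 := nf _ _ P1 P2.
have f21 := nf _ _ P2 P1.
have f13 := nf _ _ P1 P3.
have f23 := nf _ _ P2 P3.
have f32 := nf _ _ P3 P2.
have [E6 [E1 E3]] : size c = 6 /\ l1 = 1 /\ l3 = 1 by lia.
clear f12 f21 f13 f23 f32.
set i0 := l0.
have Q2 : onP A lam x0 c z i0.+2 by move: P1; have -> : l0 + 1 + l1 = i0.+2 by lia.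
have Q4 : onP A lam x0 c z i0.+4 by move: P3; have -> : l0 + 3 + l3 = i0.+4 by lia.
have N1 : ~ onP A lam x0 c z i0.+1.
  move=> H; apply: (nf _ _ H Q4); lia.
have N3 : ~ onP A lam x0 c z i0.+3.
  move=> H; apply: (nf _ _ P0 H); lia.
have N5 : ~ onP A lam x0 c z i0.+4.+1.
  move=> H; apply: (nf _ _ Q2 H); lia.
have [l_0 [r_0 [ul0 ur0 cl0 cr0 d0]]] := through S zC P0.
have [l_2 [r_2 [ul2 ur2 cl2 cr2 d2]]] := through S zC Q2.
have [l_4 [r_4 [ul4 ur4 cl4 cr4 d4]]] := through S zC Q4.
have K1 := noOnP_conn S N1.
have K3 := noOnP_conn S N3.
have K5 := noOnP_conn S N5.
have c6 : cc x0 c i0.+4.+2 = cc x0 c i0.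
  have E : i0.+4.+2 = i0 + size c by clear -E6; lia.
  by apply: cc_mod; rewrite E modnDr.
rewrite c6 in K5.
have cs := @cs_avoid V A z.
have R02 : r_0 = l_2.
  apply: (branch_uniq S ur0 ul2 (connect_trans cr0 K1) cl2).
have R24 : r_2 = l_4.
  apply: (branch_uniq S ur2 ul4 (connect_trans cr2 K3) cl4).
have R40 : r_4 = l_0.
  apply: (branch_uniq S ur4 ul0 (connect_trans cr4 K5) cl0).
subst.
move: d0 d2 d4; case: (A l_0 z); case: (A l_2 z); case: (A l_4 z) => //.
Qed.

Theorem mainTheorem11 (V : finType) (A : rel V) (tmax : nat)
    (lam : V -> V -> pred nat) :
  oriented_tree A ->
  (forall x y t, A x y -> t \in lam x y -> 1 <= t <= tmax) ->
  ~ (exists c : seq V,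
       induced_cycle (conn_graph_edge A lam) c /\
       ~~ odd (size c) /\ 6 <= size c).
Proof.
move=> [_ irr anti conn nocyc] tm [c [ind [_ sz]]].
have pos : forall x y t, A x y -> t \in lam x y -> 1 <= t.
  by move=> x y t H1 H2; case/andP: (tm x y t H1 H2).
have S : setup A lam c by split.
case: c ind sz S => [|x0 c'] //= ind sz S.
exact: no_hole S x0.
Qed.
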